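(* Let $(A,\star_A,\omega)$ be a quadratic perm algebra and let $P:A\to A$ be either an averaging operator or a derivation of $(A,\star_A)$. Define $x\circ_A y=P(x)\star_A y-x\star_A P(y)$ for all $x,y\in A$. Then $(A,\circ_A)$ is a Leibniz algebra, and $\omega$ is a nondegenerate skew-symmetric $2$-cocycle on $(A,\circ_A)$.
   Context: All vector spaces are finite-dimensional over a field $\mathbb K$ of characteristic zero. A perm algebra is a vector space $A$ with a multiplication $\star_A$ such that $x\star_A(y\star_A z)=(x\star_A y)\star_A z=(y\star_A x)\star_A z$ for all $x,y,z$. A quadratic perm algebra $(A,\star_A,\omega)$ is a perm algebra with a nondegenerate skew-symmetric bilinear form $\omega$ such that $\omega(x\star_A y,z)=\omega(x,y\star_A z-z\star_A y)$ for all $x,y,z$. A linear map $P:A\to A$ is an averaging operator of $(A,\star_A)$ if $P(x)\star_A P(y)=P(P(x)\star_A y)=P(x\star_A P(y))$ for all $x,y$, and a derivation if $P(x\star_A y)=P(x)\star_A y+x\star_A P(y)$ for all $x,y$. A Leibniz algebra is a vector space $A$ with a multiplication $\circ_A$ satisfying $x\circ_A(y\circ_A z)=(x\circ_A y)\circ_A z+y\circ_A(x\circ_A z)$. A bilinear form $\omega$ on a Leibniz algebra $(A,\circ_A)$ is a $2$-cocycle if $\omega(z,x\circ_A y)=\omega(x,y\circ_A z+z\circ_A y)-\omega(y,x\circ_A z)$ for all $x,y,z\in A$. *)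

(* Defs.v *)
From mathcomp Require Import all_boot all_order all_algebra.
Set Implicit Arguments. Unset Strict Implicit. Unset Printing Implicit Defensive.
Import GRing.Theory.
Local Open Scope ring_scope.

Section Defs.
Variables (K : fieldType) (A : vectType K).

Definition bilinear_mul (m : A -> A -> A) : Prop :=
  (forall x, linear (m x)) /\ (forall y, linear (m^~ y)).

Definition bilin_form (w : A -> A -> K) : Prop :=
  (forall x, linear (w x : A -> K^o)) /\ (forall y, linear (w^~ y : A -> K^o)).

Definition is_perm_algebra (m : A -> A -> A) : Prop :=
  forall x y z, m x (m y z) = m (m x y) z /\ m (m x y) z = m (m y x) z.

Definition skew_symm_form (w : A -> A -> K) : Prop :=
  forall x y, w x y = - w y x.

Definition nondegen_form (w : A -> A -> K) : Prop :=
  forall x, (forall y, w x y = 0) -> x = 0.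

Definition quadratic_perm_algebra (m : A -> A -> A) (w : A -> A -> K) : Prop :=
  [/\ bilinear_mul m, is_perm_algebra m, bilin_form w, skew_symm_form w &
      nondegen_form w] /\
  (forall x y z, w (m x y) z = w x (m y z - m z y)).

Definition averaging_operator (m : A -> A -> A) (P : A -> A) : Prop :=
  linear P /\
  forall x y, m (P x) (P y) = P (m (P x) y) /\ P (m (P x) y) = P (m x (P y)).

Definition derivation (m : A -> A -> A) (P : A -> A) : Prop :=
  linear P /\ forall x y, P (m x y) = m (P x) y + m x (P y).

Definition is_Leibniz_algebra (c : A -> A -> A) : Prop :=
  forall x y z, c x (c y z) = c (c x y) z + c y (c x z).

Definition is_2_cocycle (c : A -> A -> A) (w : A -> A -> K) : Prop :=
  forall x y z, w z (c x y) = w x (c y z + c z y) - w y (c x z).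

Definition induced_product (m : A -> A -> A) (P : A -> A) : A -> A -> A :=
  fun x y => m (P x) y - m x (P y).

End Defs.

(* Main.v *)
Require Import Defs.
From mathcomp Require Import all_boot all_order all_algebra.
From mathcomp Require Import ring.
Import GRing.Theory.
Local Open Scope ring_scope.

Section L.
Variables (K : fieldType).
Lemma linD (U V : lmodType K) (f : U -> V) : linear f -> forall u v, f (u+v) = f u + f v.
Proof. by move=> fL u v; have := fL 1 u v; rewrite !scale1r. Qed.
Lemma lin0 (U V : lmodType K) (f : U -> V) : linear f -> f 0 = 0.
Proof.
move=> fL; have := fL 1 0 0; rewrite scaler0 add0r scale1r => H.
by move/(congr1 (fun t => t - f 0)): H; rewrite subrr addrK.
Qed.
Lemma linB (U V : lmodType K) (f : U -> V) : linear f -> forall u v, f (u-v) = f u - f v.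
Proof. by move=> fL u v; have := fL (-1) v u; rewrite !scaleN1r => H; rewrite [u - v]addrC H addrC. Qed.
End L.

Theorem proposition2p13 (K : fieldType) (A : vectType K)
  (mul : A -> A -> A) (w : A -> A -> K) (P : A -> A) :
  [pchar K] =i pred0 ->
  quadratic_perm_algebra mul w ->
  (averaging_operator mul P \/ derivation mul P) ->
  is_Leibniz_algebra (induced_product mul P) /\
  [/\ bilin_form w, skew_symm_form w, nondegen_form w &
      is_2_cocycle (induced_product mul P) w].
Proof.
move=> _ [[[hL hR] hPerm [wL wR] wS wN] wInv] hP.
have mulBr x u v : mul x (u - v) = mul x u - mul x v by exact: (@linB K _ _ _ (hL x)).
have mulDr x u v : mul x (u + v) = mul x u + mul x v by exact: (@linD K _ _ _ (hL x)).
have mulBl y u v : mul (u - v) y = mul u y - mul v y by exact: (@linB K _ _ _ (hR y)).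
have mulDl y u v : mul (u + v) y = mul u y + mul v y by exact: (@linD K _ _ _ (hR y)).
have mA x y z : mul x (mul y z) = mul (mul x y) z by case: (hPerm x y z).
have mS x y z : mul (mul x y) z = mul (mul y x) z by case: (hPerm x y z).
have wBr x u v : w x (u - v) = w x u - w x v by exact: (@linB K _ _ _ (wL x)).
have wDr x u v : w x (u + v) = w x u + w x v by exact: (@linD K _ _ _ (wL x)).
have wBl y u v : w (u - v) y = w u y - w v y by exact: (@linB K _ _ _ (wR y)).
have wDl y u v : w (u + v) y = w u y + w v y by exact: (@linD K _ _ _ (wR y)).
have mul0l y : mul 0 y = 0 by exact: (@lin0 K _ _ _ (hR y)).
have wNr x u : w x (- u) = - w x u.
  by rewrite -sub0r wBr (@lin0 K _ _ _ (wL x)) sub0r.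
have wNl y u : w (- u) y = - w u y.
  by rewrite -sub0r wBl (@lin0 K _ _ _ (wR y)) sub0r.
have eqw a b : (forall t, w a t = w b t) -> a = b.
  move=> H; apply/eqP; rewrite -subr_eq0; apply/eqP; apply: wN => t.
  by rewrite wBl H subrr.
have key1 a b c : w a (mul b c) = w b (mul a c) - w b (mul c a).
  by rewrite wS wInv wBr opprB.
have key2 a b c : w c (mul b a) = - w a (mul b c).
  by rewrite (key1 c) (key1 a) opprB.
split; last first.
  split; [by split|exact wS|exact wN|].
  move=> x y z; rewrite /induced_product !wBr !wDr ?wBr ?wNr.
  rewrite (key2 z (P x) y) (key2 y (P z) x) (key2 z (P y) x).
  rewrite (key1 x z (P y)) (key1 x y (P z)).
  ring.
move=> x y z; rewrite /induced_product.
case: hP => [[PL hPa]|[PL hPd]].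
  have PB u v : P (u - v) = P u - P v by exact: (@linB K _ _ _ PL).
  have hav1 a b : P (mul (P a) b) = mul (P a) (P b) by case: (hPa a b).
  have hav2 a b : P (mul a (P b)) = mul (P a) (P b) by case: (hPa a b) => -> ->.
  rewrite !PB !hav1 !hav2 !mulBr !mulBl !mA.
  rewrite (mS (P y) (P x)) (mS (P y) x).
  apply: eqw => t; rewrite !(wBl, wDl, wNl); ring.
have PB u v : P (u - v) = P u - P v by exact: (@linB K _ _ _ PL).
rewrite !PB !hPd !mulBr !mulBl !mulDr !mulDl !mA.
rewrite (mS y (P (P x))) (mS (P y) x) (mS (P y) (P x)) (mS y x).
apply: eqw => t; rewrite !(wBl, wDl, wNl); ring.
Qed.
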